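(* Let $\mathbf{k}$ be a field, $p\ge3$ and $q\ge1$ integers, $S=\mathbf{k}[e_1,\dots,e_{qp}]$ with the graded reverse lexicographic order with $e_1>e_2>\cdots>e_{qp}$. Let $A'$ be the $(2q-1)\times((q-1)+(p-1)q)$ matrix with entries $A'_{i,j}=e_{pi+j-qp}$, where $e_0=1$ and $e_k=0$ for $k<0$ or $k>qp$. Then for every $(2q-1)\times(2q-1)$ submatrix $B$ of $A'$ with $\det B\neq 0$, the leading term of $\det B$ is the antidiagonal term $\operatorname{sgn}(w_0)\prod_{i=1}^{2q-1}B_{i,2q-i}$, where $w_0$ is the permutation $i\mapsto 2q-i$. *)

(* Defs.v *)
From HB Require Import structures.
From mathcomp Require Import all_boot all_order all_algebra all_fingroup.
From mathcomp Require Import mpoly.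
Set Implicit Arguments. Unset Strict Implicit. Unset Printing Implicit Defensive.
Import Order.TTheory GRing.Theory Num.Theory.
Local Open Scope ring_scope.

Definition grevlex_le (n : nat) (m1 m2 : 'X_{1..n}) : bool :=
  (mdeg m1 < mdeg m2)%N ||
  ((mdeg m1 == mdeg m2) &&
   ((m1 == m2) ||
    [exists i : 'I_n, (m2 i < m1 i)%N &&
       [forall j : 'I_n, (i < j)%N ==> (m1 j == m2 j)]])).

Definition is_grevlex_leading_term (R : ringType) (n : nat)
    (f t : {mpoly R[n]}) : Prop :=
  exists2 m : 'X_{1..n}, m \in msupp f &
    (forall m' : 'X_{1..n}, m' \in msupp f -> grevlex_le m' m) /\
    t = f@_m *: 'X_[m].

(* e_k, for k an integer, in k[e_1,...,e_N] (variable e_k is 'X_(k-1)):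
   e_0 = 1, e_k = 0 for k < 0 or k > N. *)
Definition evar (R : ringType) (N : nat) (k : int) : {mpoly R[N]} :=
  match k with
  | Posz 0 => 1
  | Posz (S m) => match insub m : option 'I_N with
                  | Some i => 'X_i
                  | None => 0
                  end
  | Negz _ => 0
  end.

(* The (2q-1) x ((q-1)+(p-1)q) matrix A' with A'_{i,j} = e_{p i + j - q p}
   (1-based indices i, j; here the 0-based ordinals i, j stand for i+1, j+1). *)
Definition Aprime (R : ringType) (p q : nat) :
    'M[{mpoly R[q * p]}]_((2 * q).-1, (q - 1) + (p - 1) * q) :=
  \matrix_(i, j) evar R (q * p)
     ((p * (i.+1))%:Z + (j.+1)%:Z - (q * p)%:Z)%R.

Definition w0 (m : nat) : 'S_m := perm (@rev_ord_inj m).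

(* Main.v *)
Require Import Defs.
From HB Require Import structures.
From mathcomp Require Import all_boot all_order all_algebra all_fingroup.
From mathcomp Require Import mpoly.
From mathcomp Require Import zify ring lra.
Import Order.TTheory GRing.Theory Num.Theory.
Local Open Scope ring_scope.



Definition convexZ (phi : int -> int) :=
  forall u v : int, u <= v -> phi (u + 1) - phi u <= phi (v + 1) - phi v.
Definition sconvexZ (phi : int -> int) :=
  forall u v : int, u < v -> phi (u + 1) - phi u < phi (v + 1) - phi v.

Lemma sconvex_convex {phi} : sconvexZ phi -> convexZ phi.
Proof.
move=> h u v; rewrite le_eqVlt => /orP[/eqP->|/h/ltW //]; exact: lexx.
Qed.

Lemma four {phi} : convexZ phi -> forall u v d : int, u <= v -> 0 <= d ->
  phi (u + d) - phi u <= phi (v + d) - phi v.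
Proof.
move=> hc u v [] // k uv _; elim: k => [|k IH]; first by rewrite !addr0 !subrr.
have := hc (u + k) (v + k); rewrite lerD2r => /(_ uv).
rewrite -[k.+1]addn1 PoszD !addrA; lra.
Qed.

Lemma four_s {phi} : sconvexZ phi -> forall u v d : int, u < v -> 0 < d ->
  phi (u + d) - phi u < phi (v + d) - phi v.
Proof.
move=> hc u v [] // [|k] uv _ //.
have := @four phi (sconvex_convex hc) (u + 0) (v + 0) k ltac:(rewrite !addr0; exact: ltW uv) (le0z_nat k); rewrite !addr0.
have := hc (u + k) (v + k); rewrite ltrD2r => /(_ uv).
rewrite -[k.+1]addn1 PoszD !addrA; lra.
Qed.

Section Rearr.
Variable n : nat.
Variables a b : 'I_n -> int.
Hypothesis ha : forall i j : 'I_n, (i < j)%N -> a i < a j.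
Hypothesis hb : forall i j : 'I_n, (i < j)%N -> b i < b j.

Definition Sphi (phi : int -> int) (s : 'S_n) := \sum_i phi (a i + b (s i)).
Definition mu (s : 'S_n) := (\sum_(k < n) k * s k)%N.

Lemma split2 (T : nmodType) (F : 'I_n -> T) (i j : 'I_n) : i != j ->
  \sum_k F k = F i + F j + \sum_(k | (k != i) && (k != j)) F k.
Proof.
move=> ij; rewrite (bigD1 i) // (bigD1 j) /= 1?eq_sym //= addrA.
congr (_ + _); apply: eq_bigl => k; by rewrite andbC.
Qed.

Lemma split2n (F : 'I_n -> nat) (i j : 'I_n) : i != j ->
  (\sum_k F k = F i + F j + \sum_(k | (k != i) && (k != j)) F k)%N.
Proof.
move=> ij; rewrite (bigD1 i) // (bigD1 j) /= 1?eq_sym //= addnA.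
congr (_ + _)%N; apply: eq_bigl => k; by rewrite andbC.
Qed.

Lemma mu_step (s : 'S_n) (i j : 'I_n) : (i < j)%N -> (s i < s j)%N ->
  (mu (tperm i j * s) < mu s)%N.
Proof.
move=> ij sij; have nij : i != j by rewrite neq_ltn ij.
rewrite /mu (@split2n (fun k : 'I_n => k * (tperm i j * s)%g k)%N i j nij) (@split2n (fun k : 'I_n => k * s k)%N i j nij).
rewrite !permM tpermL tpermR.
rewrite (eq_bigr (fun k : 'I_n => k * s k)%N); last first.
  by move=> k /andP[ki kj]; rewrite permM tpermD // eq_sym.
set R := (\sum_(k | _) _)%N.
move: (s i) (s j) sij (nat_of_ord i) (nat_of_ord j) ij => x y + u v.
move=> /subnKC <- /subnKC <-.
set d1 := (y - x.+1)%N; set d2 := (v - u.+1)%N.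
rewrite !mulnDr !mulnDl !mulSn !mulnS; lia.
Qed.

Lemma S_step phi (s : 'S_n) (i j : 'I_n) : (i < j)%N -> (s i < s j)%N ->
  convexZ phi -> Sphi phi (tperm i j * s) <= Sphi phi s.
Proof.
move=> ij sij hc; have nij : i != j by rewrite neq_ltn ij.
rewrite /Sphi (@split2 _ (fun k => phi (a k + b ((tperm i j * s)%g k))) i j nij) (@split2 _ (fun k => phi (a k + b (s k))) i j nij).
rewrite !permM tpermL tpermR.
rewrite (eq_bigr (fun k => phi (a k + b (s k)))); last first.
  by move=> k /andP[ki kj]; rewrite permM tpermD // eq_sym.
have h := @four phi hc (a i + b (s i)) (a j + b (s i)) (b (s j) - b (s i)).
have e1 : a i + b (s i) + (b (s j) - b (s i)) = a i + b (s j) by ring.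
have e2 : a j + b (s i) + (b (s j) - b (s i)) = a j + b (s j) by ring.
rewrite e1 e2 in h.
have := ha _ _ ij; have := hb _ _ sij => h1 h2.
have := h ltac:(lra) ltac:(lra); lra.
Qed.

Lemma S_step_s phi (s : 'S_n) (i j : 'I_n) : (i < j)%N -> (s i < s j)%N ->
  sconvexZ phi -> Sphi phi (tperm i j * s) < Sphi phi s.
Proof.
move=> ij sij hc; have nij : i != j by rewrite neq_ltn ij.
rewrite /Sphi (@split2 _ (fun k => phi (a k + b ((tperm i j * s)%g k))) i j nij) (@split2 _ (fun k => phi (a k + b (s k))) i j nij).
rewrite !permM tpermL tpermR.
rewrite (eq_bigr (fun k => phi (a k + b (s k)))); last first.
  by move=> k /andP[ki kj]; rewrite permM tpermD // eq_sym.
have h := @four_s phi hc (a i + b (s i)) (a j + b (s i)) (b (s j) - b (s i)).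
have e1 : a i + b (s i) + (b (s j) - b (s i)) = a i + b (s j) by ring.
have e2 : a j + b (s i) + (b (s j) - b (s i)) = a j + b (s j) by ring.
rewrite e1 e2 in h.
have := ha _ _ ij; have := hb _ _ sij => h1 h2.
have := h ltac:(lra) ltac:(lra); lra.
Qed.

Lemma desc_rev (s : 'S_n) :
  (forall i j : 'I_n, (i < j)%N -> (s j < s i)%N) -> s = w0 n.
Proof.
move=> hd.
have lo : forall d (k : 'I_n), (k + d)%N = n.-1 -> (d <= s k)%N.
  elim=> [//|d IH] k hk.
  have lk : (k.+1 < n)%N by have := ltn_ord k; lia.
  have := IH (Ordinal lk) ltac:(rewrite /=; lia).
  have := hd k (Ordinal lk) (ltnSn k); lia.
have hi : forall d (k : 'I_n), nat_of_ord k = d -> (s k + d <= n.-1)%N.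
  elim=> [|d IH] k hk; first by have := ltn_ord (s k); lia.
  have lk : (d < n)%N by have := ltn_ord k; lia.
  have := IH (Ordinal lk) erefl.
  have := hd (Ordinal lk) k ltac:(rewrite /=; lia); lia.
apply/permP => k; apply: val_inj; rewrite permE /=.
have := lo (n.-1 - k)%N k ltac:(have := ltn_ord k; lia).
have := hi k k erefl; have := ltn_ord k; lia.
Qed.

Lemma asc_or_rev (s : 'S_n) : s = w0 n \/
  exists i j : 'I_n, (i < j)%N /\ (s i < s j)%N.
Proof.
case: (boolP [exists i : 'I_n, exists j : 'I_n, (i < j)%N && (s i < s j)%N]).
  by move=> /existsP[i /existsP[j /andP[h1 h2]]]; right; exists i, j.
move=> hn; left; apply: desc_rev => i j ij.
have : ~~ (s i < s j)%N.
  apply: contra hn => h; apply/existsP; exists i; apply/existsP; exists j.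
  by rewrite ij.
have : s i != s j by rewrite (inj_eq perm_inj) neq_ltn ij.
rewrite neq_ltn => /orP[->//|//].
Qed.

Lemma rearr phi : convexZ phi -> forall s, Sphi phi (w0 n) <= Sphi phi s.
Proof.
move=> hc s; move: {2}(mu s) (erefl (mu s)) => m; elim/ltn_ind: m s => m IH s hm.
case: (asc_or_rev s) => [->|[i [j [ij sij]]]]; first exact: lexx.
apply: le_trans (@S_step phi s i j ij sij hc).
apply: (IH (mu (tperm i j * s))) => //; rewrite -hm; exact: mu_step.
Qed.

Lemma rearr_s phi : sconvexZ phi -> forall s, s != w0 n ->
  Sphi phi (w0 n) < Sphi phi s.
Proof.
move=> hc s sw; case: (asc_or_rev s) => [e|[i [j [ij sij]]]].
  by rewrite e eqxx in sw.
apply: le_lt_trans (@S_step_s phi s i j ij sij hc).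
exact: rearr (sconvex_convex hc) _.
Qed.
End Rearr.
Definition phiB (N : nat) (v : int) : int :=
  (if v < 0 then - v else 0) + (if N%:Z < v then v - N%:Z else 0).
Definition phiZ (v : int) : int := if v < 1 then 1 - v else 0.
Definition phiM (M : nat) (v : int) : int := (M ^ `|v|)%N%:Z.
Definition phi2 (v : int) : int := v * v.

Lemma phiB_convex N : convexZ (phiB N).
Proof.
move=> u v uv; rewrite /phiB.
case: (ltP u 0); case: (ltP v 0); case: (ltP (u+1) 0); case: (ltP (v+1) 0);
case: (ltP N%:Z u); case: (ltP N%:Z v); case: (ltP N%:Z (u+1)); case: (ltP N%:Z (v+1)); lia.
Qed.

Lemma phiZ_convex : convexZ phiZ.
Proof.
move=> u v uv; rewrite /phiZ.
case: (ltP u 1); case: (ltP v 1); case: (ltP (u+1) 1); case: (ltP (v+1) 1); lia.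
Qed.

Lemma phi2_sconvex : sconvexZ phi2.
Proof. move=> u v uv; rewrite /phi2; nia. Qed.

Lemma phiM_convex M : (0 < M)%N -> convexZ (phiM M).
Proof.
move=> M0 u v uv; rewrite /phiM.
have mono : forall k l, (k <= l)%N -> (M ^ k <= M ^ l)%N.
  by move=> k l kl; rewrite leq_pexp2l.
case: (leP 0 u) => u0.
  have eu : (absz (u + 1)%R) = (absz (u)).+1 by lia.
  have ev : (absz (v + 1)%R) = (absz (v)).+1 by lia.
  rewrite eu ev !expnS.
  have := mono (absz (u)) (absz (v)) ltac:(lia).
  move: (M ^ (absz (u)))%N (M ^ (absz (v)))%N => A B AB; nia.
have Au : (M ^ (absz (u + 1)%R) <= M ^ (absz (u)))%N by apply: mono; lia.
case: (leP 0 v) => v0.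
  have ev : (absz (v + 1)%R) = (absz (v)).+1 by lia.
  rewrite ev expnS.
  move: (M ^ (absz (v)))%N Au => B Au; nia.
have eu : (absz (u)) = (absz (u + 1)%R).+1 by lia.
have ev : (absz (v)) = (absz (v + 1)%R).+1 by lia.
rewrite eu ev !expnS.
have := mono (absz (v + 1)%R) (absz (u + 1)%R) ltac:(lia).
move: (M ^ (absz (u + 1)%R))%N (M ^ (absz (v + 1)%R))%N => A B AB; nia.
Qed.

Section BaseM.
Variables N M : nat.
Hypothesis M0 : (0 < M)%N.

Definition W (m : 'X_{1..N}) := (\sum_(j < N) m j * M ^ j.+1)%N.

Lemma geom i : (\sum_(k < i) (M - 1) * M ^ k.+1 + M = M ^ i.+1)%N.
Proof.
elim: i => [|i IH]; first by rewrite big_ord0 add0n expn1.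
rewrite big_ord_recr /= addnAC IH -{1}(mul1n (M ^ i.+1)%N) -mulnDl addnC subnK //.

Qed.

Lemma Lbound (m : 'X_{1..N}) (i : 'I_N) : (forall j, m j < M)%N ->
  (\sum_(j < N | (j < i)%N) m j * M ^ j.+1 < M ^ i.+1)%N.
Proof.
move=> hm.
apply: (@leq_ltn_trans (\sum_(j < N | (j < i)%N) (M - 1) * M ^ j.+1)%N).
  apply: leq_sum => j _; rewrite leq_mul2r; apply/orP; right.
  by have := hm j; lia.
rewrite (eq_bigl (fun j : 'I_N => true && (j < i)%N)) //.
rewrite -(@big_ord_widen_cond nat 0%N addn i N xpredT (fun k => (M - 1) * M ^ k.+1)%N);
  last exact: ltnW (ltn_ord i).
by rewrite -(geom i); lia.
Qed.

Lemma Wsplit (m : 'X_{1..N}) (i : 'I_N) :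
  W m = (\sum_(j < N | (j < i)%N) m j * M ^ j.+1 + m i * M ^ i.+1
         + \sum_(j < N | (i < j)%N) m j * M ^ j.+1)%N.
Proof.
rewrite /W (bigD1 i) //= (bigID (fun j : 'I_N => (j < i)%N)) /=.
rewrite (eq_bigl (fun j : 'I_N => (j < i)%N)); last first.
  by move=> j /=; rewrite neq_ltn; case: ltngtP.
rewrite (eq_bigl (fun j : 'I_N => (i < j)%N) (P1 := fun j : 'I_N => (j != i) && ~~ (j < i)%N)); last first.
  by move=> j /=; rewrite neq_ltn; case: ltngtP.
lia.
Qed.

Lemma baseM_lt (m1 m2 : 'X_{1..N}) (i : 'I_N) : (forall j, m1 j < M)%N ->
  (m1 i < m2 i)%N -> (forall j : 'I_N, (i < j)%N -> m1 j = m2 j) ->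
  (W m1 < W m2)%N.
Proof.
move=> hm lt eq; rewrite !(Wsplit _ i).
have -> : (\sum_(j < N | (i < j)%N) m1 j * M ^ j.+1 =
           \sum_(j < N | (i < j)%N) m2 j * M ^ j.+1)%N.
  by apply: eq_bigr => j /eq ->.
have := @Lbound m1 i hm.
have : (M ^ i.+1 + m1 i * M ^ i.+1 <= m2 i * M ^ i.+1)%N.
  by rewrite -mulSn leq_mul2r lt orbT.
lia.
Qed.

Lemma baseM (m1 m2 : 'X_{1..N}) : (forall j, m1 j < M)%N -> (forall j, m2 j < M)%N ->
  (W m1 <= W m2)%N -> m1 != m2 ->
  exists i : 'I_N, (m1 i < m2 i)%N &&
     [forall j : 'I_N, (i < j)%N ==> (m2 j == m1 j)].
Proof.
move=> h1 h2 hW ne.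
have [j0 hj0] : exists j0, m1 j0 != m2 j0.
  apply/existsP; apply: contraR ne => /existsPn hn; apply/eqP/mnmP => j.
  by have := hn j; rewrite negbK => /eqP.
case: (@arg_maxnP _ j0 (fun j : 'I_N => m1 j != m2 j) (fun j : 'I_N => nat_of_ord j) hj0) => i hi hmax.
have agree : forall j : 'I_N, (i < j)%N -> m2 j = m1 j.
  move=> j ij; apply/eqP; rewrite eq_sym; apply: contraTT ij => hj.
  by rewrite -leqNgt; exact: hmax.
exists i; apply/andP; split; last first.
  by apply/forallP => j; apply/implyP => /agree ->.
case: (ltngtP (m1 i) (m2 i)) => // h.
  have := @baseM_lt m2 m1 i h2 h agree; lia.
by rewrite h eqxx in hi.
Qed.
End BaseM.

Section Main.
Variable R : fieldType.
Variables N n : nat.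
Variables a b : 'I_n -> int.
Hypothesis ha : forall i j : 'I_n, (i < j)%N -> a i < a j.
Hypothesis hb : forall i j : 'I_n, (i < j)%N -> b i < b j.

Definition xs (s : 'S_n) i := a i + b (s i).
Definition inr (v : int) : bool := (0 <= v) && (v <= N%:Z).
Definition good (s : 'S_n) := [forall i, inr (xs s i)].
Definition mon (v : int) : 'X_{1..N} :=
  [multinom ((v == (j.+1)%:Z) : nat) | j < N].
Definition msig (s : 'S_n) : 'X_{1..N} := \big[+%MM/mnm0]_i mon (xs s i).
Definition zc (s : 'S_n) := (\sum_i ((xs s i == 0) : nat))%N.

Lemma msigE s j : msig s j = (\sum_i ((xs s i == (j.+1)%:Z) : nat))%N.
Proof. by rewrite /msig mnm_sumE; apply: eq_bigr => i _; rewrite mnmE. Qed.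

Lemma msig_le s j : (msig s j <= n)%N.
Proof.
rewrite msigE; apply: (@leq_trans (\sum_(i < n) 1)%N).
  by apply: leq_sum => i _; case: eqP.
by rewrite sum1_card card_ord.
Qed.

Lemma evarE v : evar R N v = if inr v then 'X_[mon v] else 0.
Proof.
rewrite /inr; case: v => [[|k]|k] /=.
- have -> : mon 0 = mnm0 by apply/mnmP => j; rewrite !mnmE.
  by rewrite mpolyX0.
- case: insubP => [i hi vi|hn].
    have -> : mon (Posz k.+1) = U_(i)%MM.
      apply/mnmP => j; rewrite mnmE mnm1E.
      by rewrite -[i == j]val_eqE vi.
    by have := ltn_ord i; rewrite vi lez_nat => ->.
  by rewrite lez_nat ltnNge; move: hn; case: leqP.
- by [].
Qed.

Lemma termE s : \prod_i evar R N (xs s i) = if good s then 'X_[msig s] else 0.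
Proof.
case: ifP => gs.
  rewrite /msig (big_morph (fun m => 'X_[m] : {mpoly R[N]}) (@mpolyXD _ _) (@mpolyX0 _ _)).
  apply: eq_bigr => i _; rewrite evarE.
  by move/forallP: gs => /(_ i) ->.
move/negbT/forallPn: gs => [i hi].
by rewrite (bigD1 i) //= evarE (negbTE hi) mul0r.
Qed.

Lemma pt (phi : int -> int) (x : int) : inr x ->
  phi x = ((x == 0) : nat)%:Z * phi 0 +
          \sum_(j < N) ((x == (j.+1)%:Z) : nat)%:Z * phi (j.+1)%:Z.
Proof.
rewrite /inr; case: x => [[|k]|k] hk.
- rewrite big1 ?addr0 ?mul1r // => j _.
  by rewrite mul0r.
- rewrite mul0r add0r.
  have lk : (k < N)%N by move: hk; rewrite lez_nat.
  rewrite (bigD1 (Ordinal lk)) //= eqxx mul1r big1 ?addr0 // => j hj.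
  suff -> : (Posz k.+1 == Posz j.+1) = false by rewrite mul0r.
  apply/negbTE; apply: contra hj => /eqP [] e; apply/eqP/val_inj => /=; by rewrite e.
- by move: hk.
Qed.

Lemma decomp (phi : int -> int) s : good s ->
  @Sphi n a b phi s = (zc s)%:Z * phi 0 + \sum_(j < N) (msig s j)%:Z * phi (j.+1)%:Z.
Proof.
move=> gs; rewrite /Sphi.
rewrite (eq_bigr (fun i => ((xs s i == 0) : nat)%:Z * phi 0 +
          \sum_(j < N) ((xs s i == (j.+1)%:Z) : nat)%:Z * phi (j.+1)%:Z)); last first.
  by move=> i _; apply: pt; move/forallP: gs.
rewrite big_split /=; congr (_ + _).
  by rewrite /zc (big_morph Posz PoszD (erefl _)) mulr_suml.
rewrite exchange_big /=; apply: eq_bigr => j _.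
by rewrite msigE (big_morph Posz PoszD (erefl _)) mulr_suml.
Qed.

Lemma degE s : good s -> (mdeg (msig s) + zc s = n)%N.
Proof.
move=> gs; have := @decomp (fun _ => 1) s gs.
rewrite /Sphi sumr_const card_ord mulr1.
under eq_bigr do rewrite mulr1.
rewrite -(big_morph Posz PoszD (erefl _)) -mdegE -PoszD => e.
move: e; rewrite -natz; lia.
Qed.

Lemma phiB_ge0 v : 0 <= phiB N v.
Proof. rewrite /phiB; case: (ltP v 0); case: (ltP N%:Z v); lia. Qed.

Lemma phiB_in v : inr v -> phiB N v = 0.
Proof. rewrite /inr /phiB; case: (ltP v 0); case: (ltP N%:Z v); lia. Qed.

Lemma phiB_out v : ~~ inr v -> 0 < phiB N v.
Proof. rewrite /inr /phiB; case: (ltP v 0); case: (ltP N%:Z v); lia. Qed.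


Lemma sign_mulZ k (p : {mpoly R[N]}) : (-1) ^+ k * p = ((-1) ^+ k : R) *: p.
Proof.
by rewrite -mul_mpolyC rmorph_sign.
Qed.

Lemma phiZ0 : phiZ 0 = 1. Proof. by []. Qed.
Lemma phiZS k : phiZ (Posz k.+1) = 0.
Proof. by rewrite /phiZ; case: ltP => //; lia. Qed.

Theorem G (B : 'M[{mpoly R[N]}]_n) (hB : forall i k, B i k = evar R N (a i + b k)) :
  \det B != 0 ->
  is_grevlex_leading_term (\det B)
    ((-1) ^+ (w0 n) * \prod_(i < n) B i (rev_ord i)).
Proof.
move=> hdet.
have detE : \det B = \sum_(s : 'S_n) (-1) ^+ s * (if good s then 'X_[msig s] else 0).
  rewrite /determinant; apply: eq_bigr => s _; rewrite -termE; congr (_ * _).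
  by apply: eq_bigr => i _; rewrite hB.
have gw : good (w0 n).
  apply/negPn/negP => ngw; move: hdet; rewrite detE big1 ?eqxx // => s _.
  suff -> : good s = false by rewrite mulr0.
  apply/negbTE/negP => gs.
  have h1 : @Sphi n a b (phiB N) s = 0.
    by apply: big1 => i _; apply: phiB_in; move/forallP: gs => /(_ i).
  have h2 : 0 < @Sphi n a b (phiB N) (w0 n).
    move/forallPn: ngw => [i hi]; rewrite /Sphi (bigD1 i) //=.
    have := @phiB_out _ hi; have : 0 <= \sum_(j < n | j != i) phiB N (a j + b (w0 n j)).
      by apply: sumr_ge0 => j _; exact: phiB_ge0.
    rewrite /xs; lra.
  have := @rearr n a b ha hb _ (@phiB_convex N) s; lra.
set m0 := msig (w0 n).
have coef : forall m, (\det B)@_m =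
    \sum_(s : 'S_n) (if good s && (msig s == m) then (-1) ^+ s else 0).
  move=> m; rewrite detE raddf_sum; apply: eq_bigr => s _.
  case: (good s) => /=; last by rewrite mulr0 raddf0.
  by rewrite sign_mulZ mcoeffZ mcoeffX; case: eqP; rewrite ?mulr1 ?mulr0.
have uniq : forall s, good s -> msig s = m0 -> s = w0 n.
  move=> s gs e; apply/eqP; apply: contraT => sw.
  have := @rearr_s n a b ha hb _ phi2_sconvex _ sw.
  by rewrite (decomp _ _ gs) (decomp _ _ gw) e /phi2 !mulr0 !add0r ltxx.
have cm0 : (\det B)@_m0 = (-1) ^+ (w0 n).
  rewrite coef (bigD1 (w0 n)) //= gw eqxx big1 ?addr0 // => s sw.
  case: ifP => // /andP[gs /eqP e].
  by rewrite (uniq s gs e) eqxx in sw.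
have supp : forall m', m' \in msupp (\det B) -> exists2 s, good s & msig s = m'.
  move=> m'; rewrite mcoeff_msupp coef => h.
  case: (pickP (fun s => good s && (msig s == m'))) => [s /andP[gs /eqP e]|hn].
    by exists s.
  by rewrite big1 ?eqxx // in h => s _; rewrite hn.
have grev : forall s, good s -> grevlex_le (msig s) m0.
  move=> s gs; have d0 := degE _ gw; have ds := degE _ gs.
  have zle : (zc (w0 n) <= zc s)%N.
    have := @rearr n a b ha hb _ phiZ_convex s.
    rewrite (decomp _ _ gs) (decomp _ _ gw) phiZ0.
    rewrite !big1 ?addr0 ?mulr1 ?lez_nat // => j _; by rewrite phiZS mulr0.
  rewrite /grevlex_le.
  case: (ltngtP (zc (w0 n)) (zc s)) => hz.
  - by apply/orP; left; rewrite /m0; lia.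
  - lia.
  apply/orP; right; apply/andP; split; first by apply/eqP; rewrite /m0; lia.
  case: (eqVneq (msig s) m0) => [e|ne]; first by apply/orP; left; apply/eqP.
  apply/orP; right.
  have hW : (W N n.+1 m0 <= W N n.+1 (msig s))%N.
    have := @rearr n a b ha hb _ (@phiM_convex n.+1 (ltn0Sn n)) s.
    rewrite (decomp _ _ gs) (decomp _ _ gw) hz lerD2l /W.
    move=> h; rewrite -lez_nat !(big_morph Posz PoszD (erefl _)).
    rewrite (eq_bigr (fun j : 'I_N => (m0 j)%:Z * phiM n.+1 (j.+1)%:Z)); last by move=> j _; rewrite PoszM.
    rewrite [X in _ <= X](eq_bigr (fun j : 'I_N => (msig s j)%:Z * phiM n.+1 (j.+1)%:Z)); last by move=> j _; rewrite PoszM.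
    exact: h.
  have hd : forall m : 'X_{1..N}, (forall j, m j <= n)%N -> forall j, (m j < n.+1)%N.
    by move=> m hm j; rewrite ltnS.
  have [i hi] := @baseM N n.+1 (ltn0Sn n) m0 (msig s) (hd _ (msig_le _)) (hd _ (msig_le _)) hW ltac:(by rewrite eq_sym).
  by apply/existsP; exists i.
exists m0; first by rewrite mcoeff_msupp cm0 signr_eq0.
split; first by move=> m' /supp [s gs <-]; exact: grev.
rewrite cm0 -sign_mulZ; congr (_ * _).
rewrite /m0; have := termE (w0 n); rewrite gw => <-.
by apply: eq_bigr => i _; rewrite hB /xs permE.
Qed.

End Main.

Theorem proposition5p5 (F : fieldType) (p q : nat) (hp : (3 <= p)%N) (hq : (1 <= q)%N)
    (f : 'I_((2 * q).-1) -> 'I_((q - 1) + (p - 1) * q))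
    (hf : forall a b : 'I_((2 * q).-1), (a < b)%N -> (f a < f b)%N) :
  let B := colsub f (Aprime F p q) in
  \det B != 0 ->
  is_grevlex_leading_term (\det B)
    ((-1) ^+ (w0 (2 * q).-1) *
       \prod_(i < (2 * q).-1) B i (rev_ord i)).
Proof.
move=> B hdet.
pose a := fun i : 'I_((2 * q).-1) => (p * i.+1)%N%:Z - (q * p)%N%:Z.
pose b := fun k : 'I_((2 * q).-1) => ((f k).+1)%:Z.
have ha : forall i j : 'I_((2 * q).-1), (i < j)%N -> a i < a j.
  move=> i j ij; rewrite /a; nia.
have hb : forall i j : 'I_((2 * q).-1), (i < j)%N -> b i < b j.
  move=> i j ij; rewrite /b; have := hf i j ij; lia.
have hB : forall i k, B i k = evar F (q * p) (a i + b k).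
  move=> i k; rewrite /B /Aprime !mxE; congr evar; rewrite /a /b; lia.
exact: (@G F (q * p) ((2 * q).-1) a b ha hb B hB hdet).
Qed.
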